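(* Let $r$ be a constant positive integer and $\varepsilon>0$ a constant. For each $n$, let $L(r,m)=(A\cup B,E)$ be a connected bipartite graph on $m=m(n)$ vertices with bipartition $(A,B)$ such that every vertex in $A$ has at most $r$ neighbors in $B$. If $m=O(n^{1-\varepsilon})$, then $$\lim_{n\to\infty}\frac{\log M_{L(r,m)}(n)}{\binom{n}{2}}=1.$$
   Context: Logarithms are base 2. For graphs $G,G'$ on the same vertex set $[n]$, their symmetric difference $G\oplus G'$ is the graph on $[n]$ whose edge set consists of all edges belonging to exactly one of $G,G'$. For a graph $L$, $M_{L}(n)$ denotes the maximum possible size of a family $\mathcal{G}$ of graphs on vertex set $[n]$ such that for any two distinct $G,G'\in\mathcal{G}$, $G\oplus G'$ contains $L$ as a subgraph. *)

(* Defs.v *)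
From mathcomp Require Import all_boot.
Set Implicit Arguments. Unset Strict Implicit. Unset Printing Implicit Defensive.

(* A graph on vertex set [n] = 'I_n is a set of 2-element subsets (edges). *)
Definition graph (n : nat) := {set {set 'I_n}}.

Definition is_graph n (G : graph n) : bool := [forall e in G, #|e| == 2].

Definition symdiff n (G G' : graph n) : graph n := (G :\: G') :|: (G' :\: G).

Definition contains_sub n m (H : graph n) (L : rel 'I_m) : bool :=
  [exists f : {ffun 'I_m -> 'I_n},
     injectiveb f && [forall x, forall y, L x y ==> ([set f x; f y] \in H)]].

Definition good_family n m (L : rel 'I_m) (F : {set graph n}) : bool :=
  [forall G in F, is_graph G] &&
  [forall G in F, forall G' in F, (G != G') ==> contains_sub (symdiff G G') L].

Definition M_L n m (L : rel 'I_m) : nat :=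
  \max_(F : {set graph n} | good_family L F) #|F|.

Definition simple_graph m (L : rel 'I_m) : Prop :=
  (forall x y, L x y = L y x) /\ (forall x, ~~ L x x).
Definition connected m (L : rel 'I_m) : Prop := forall x y, connect L x y.

Definition bipartite_deg m (L : rel 'I_m) (A : {set 'I_m}) (r : nat) : Prop :=
  (forall x y, L x y -> (x \in A) = (y \notin A)) /\
  (forall x, x \in A -> #|[set y | L x y]| <= r).

(* Main.v *)
Require Import Defs.
From mathcomp Require Import all_boot zify.
Set Implicit Arguments. Unset Strict Implicit. Unset Printing Implicit Defensive.

Lemma sdr (I T : finType) (t0 : T) (C : I -> {set T}) : forall k (D : {set I}),
  #|D| = k -> (forall i, i \in D -> #|D| <= #|C i|) ->
  exists g : I -> T, {in D &, injective g} /\ forall i, i \in D -> g i \in C i.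
Proof.
elim=> [|k IH] D hD hC.
  have D0 : D = set0 by apply/eqP; rewrite -cards_eq0 hD.
  exists (fun _ => t0); split; first by move=> i j; rewrite D0 inE.
  by move=> i; rewrite D0 inE.
have [i0 Hi0] : exists i0, i0 \in D by apply/set0Pn; rewrite -card_gt0 hD.
set D' := D :\ i0.
have hD' : #|D'| = k by move: hD; rewrite (cardsD1 i0 D) Hi0 add1n; case.
have sub : forall i, i \in D' -> i \in D by move=> i /setD1P [].
have [g' [ig' cg']] : exists g' : I -> T, {in D' &, injective g'} /\ forall i, i \in D' -> g' i \in C i.
  apply: (IH D' hD') => i hi; apply: leq_trans (hC i (sub i hi)).
  exact: subset_leq_card (subD1set D i0).
have [t Ht] : exists t, t \in C i0 :\: g' @: D'.
  apply/set0Pn; rewrite -card_gt0 cardsD.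
  have h1 := hC i0 Hi0.
  have h2 : #|C i0 :&: g' @: D'| <= k.
    by rewrite -hD'; apply: leq_trans (leq_imset_card g' D'); apply: subset_leq_card; apply: subsetIr.
  rewrite hD in h1; lia.
move/setDP: Ht => [Ht1 Ht2].
exists (fun i => if i == i0 then t else g' i); split.
  move=> i j hi hj /=.
  case: eqP => [->|ne1]; case: eqP => [->|ne2] //.
  - move=> e; exfalso; move: Ht2; rewrite e; move/negP; apply.
    by apply: imset_f; apply/setD1P; split=> //; apply/eqP.
  - move=> e; exfalso; move: Ht2; rewrite -e; move/negP; apply.
    by apply: imset_f; apply/setD1P; split=> //; apply/eqP.
  by apply: ig'; apply/setD1P; split=> //; apply/eqP.
move=> i hi /=; case: eqP => [->|ne] //.
by apply: cg'; apply/setD1P; split=> //; apply/eqP.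
Qed.

Definition cn n (H : graph n) (S : {set 'I_n}) : {set 'I_n} :=
  [set u | [forall s in S, [set u; s] \in H]].

Lemma embed n m (L : rel 'I_m) (A : {set 'I_m}) r (H : graph n) (U : {set 'I_n}) :
  0 < n -> (forall x y, L x y = L y x) -> bipartite_deg L A r ->
  m <= #|U| ->
  (forall S : {set 'I_n}, S \subset U -> #|S| <= r -> m <= #|cn H S|) ->
  contains_sub H L.
Proof.
move=> n0 Lsym [hb hdeg] mU hU.
pose t0 : 'I_n := Ordinal n0.
have [h [ih ch]] := @sdr _ _ t0 (fun _ => U) _ (~: A) erefl
   (fun i _ => leq_trans (leq_trans (max_card _) (eq_leq (card_ord m))) mU).
pose Nb a := [set y | L a y].
pose S a := h @: Nb a.
pose C a := cn H (S a) :\: h @: ~: A.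
have NbB : forall a y, a \in A -> y \in Nb a -> y \in ~: A.
  move=> a y aA; rewrite !inE => Lay; move: (hb a y Lay); rewrite aA; by move<-.
have [g [ig cg]] : exists g : 'I_m -> 'I_n, {in A &, injective g} /\ forall i, i \in A -> g i \in C i.
  apply: (@sdr _ _ t0 C _ A erefl) => a aA.
  have SU : S a \subset U.
    apply/subsetP => u /imsetP [y yN ->]; apply: ch; exact: NbB yN.
  have Sr : #|S a| <= r by apply: leq_trans (leq_imset_card _ _) (hdeg a aA).
  have h1 := hU _ SU Sr.
  rewrite /C cardsD.
  have h2 : #|cn H (S a) :&: h @: ~: A| <= #|~: A|.
    by apply: leq_trans (leq_imset_card _ _); apply: subset_leq_card; apply: subsetIr.
  have h3 := cardsC A; rewrite card_ord in h3.
  apply: (@leq_trans (m - #|~: A|)).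
    by apply: (@leq_trans (#|A| + #|~:A| - #|~:A|)); [rewrite addnK | rewrite h3].
  exact: leq_sub h1 h2.
apply/existsP; exists [ffun x => if x \in A then g x else h x]; apply/andP; split.
  apply/injectiveP => x y; rewrite !ffunE.
  case: (boolP (x \in A)) => xA; case: (boolP (y \in A)) => yA.
  - exact: ig.
  - move=> e; exfalso; move: (cg x xA); rewrite /C e => /setDP [_ /negP]; apply.
    by apply: imset_f; rewrite inE.
  - move=> e; exfalso; move: (cg y yA); rewrite /C -e => /setDP [_ /negP]; apply.
    by apply: imset_f; rewrite inE.
  - by apply: ih; rewrite inE.
apply/forallP => x; apply/forallP => y; apply/implyP => Lxy; rewrite !ffunE.
have e := hb x y Lxy.
case: (boolP (x \in A)) => xA.
  have yA : y \notin A by rewrite -e.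
  rewrite (negbTE yA).
  move: (cg x xA) => /setDP [hc _]; move: hc; rewrite inE => /forallP /(_ (h y)) /implyP; apply.
  by apply: imset_f; rewrite inE.
have yA : y \in A by move: e; rewrite (negbTE xA); case: (y \in A).
rewrite yA setUC.
move: (cg y yA) => /setDP [hc _]; move: hc; rewrite inE => /forallP /(_ (h x)) /implyP; apply.
by apply: imset_f; rewrite inE Lsym.
Qed.

Lemma sum_ind_card (T : finType) (P : pred T) : \sum_(x : T) (P x : nat) = #|[set x | P x]|.
Proof.
rewrite -sum1_card [RHS]big_mkcond /=; apply: eq_bigr => x _; rewrite inE; by case: (P x).
Qed.

Lemma sum_ffun_on n t (X : {set 'I_n}) :
  \sum_(T : {ffun 'I_t -> 'I_n}) ([forall i, T i \in X] : nat) = #|X| ^ t.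
Proof.
rewrite sum_ind_card.
have -> : #|X| ^ t = #|X| ^ #|'I_t| by rewrite card_ord.
rewrite -card_ffun_on; apply: eq_card => T.
rewrite inE; apply/forallP/ffun_onP => h x; exact: h.
Qed.

Lemma bin_le_pow n k : 'C(n, k) <= n ^ k.
Proof.
apply: (@leq_trans ('C(n, k) * k`!)); first by rewrite leq_pmulr // fact_gt0.
rewrite bin_ffact ffact_prod.
have -> : n ^ k = n ^ #|'I_k| by rewrite card_ord.
rewrite -prod_nat_const.
by apply: leq_prod => i _; apply: leq_subr.
Qed.

Lemma card_small_sets n r : #|[set S : {set 'I_n} | #|S| <= r]| <= n.+1 ^ r.
Proof.
elim: r => [|r IH].
  rewrite expn0; apply: (@leq_trans #|[set (set0 : {set 'I_n})]|); last by rewrite cards1.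
  by apply: subset_leq_card; apply/subsetP => S; rewrite !inE leqn0 cards_eq0.
apply: (@leq_trans #|[set S : {set 'I_n} | #|S| <= r] :|: [set S : {set 'I_n} | #|S| == r.+1]|).
  by apply: subset_leq_card; apply/subsetP => S; rewrite !inE leq_eqVlt ltnS orbC.
apply: leq_trans (leq_card_setU _ _) _.
rewrite card_draws card_ord expnSr mulnSr addnC leq_add //.
apply: leq_trans (bin_le_pow n r.+1) _; rewrite expnSr mulnC [X in _ <= X]mulnC leq_mul2l.
apply/orP; right; case: r IH => [|r'] _; first by rewrite !expn0.
by rewrite leq_exp2r.
Qed.

Lemma pow_mono a b e : a <= b -> a ^ e <= b ^ e.
Proof. by move=> h; elim: e => // e IH; rewrite !expnS leq_mul. Qed.

Definition nb n (H : graph n) (u : 'I_n) : {set 'I_n} := [set v | [set v; u] \in H].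

Lemma drc n (H : graph n) m r t :
  0 < n -> m <= n ->
  m * n ^ t + n.+1 ^ r * m ^ t <= \sum_(u : 'I_n) #|nb H u| ^ t ->
  exists U : {set 'I_n}, m <= #|U| /\
    forall S : {set 'I_n}, S \subset U -> #|S| <= r -> m <= #|cn H S|.
Proof.
move=> n0 mn hyp.
pose UT (T : {ffun 'I_t -> 'I_n}) := [set u | [forall i, [set T i; u] \in H]].
pose bad (S : {set 'I_n}) := (#|S| <= r) && (#|cn H S| < m).
pose BadT T := [set S | bad S && (S \subset UT T)].
have c1 : \sum_T #|UT T| = \sum_(u : 'I_n) #|nb H u| ^ t.
  under eq_bigr => T _ do rewrite -sum1_card big_mkcond /=.
  rewrite exchange_big /=; apply: eq_bigr => u _.
  rewrite -sum_ffun_on; apply: eq_bigr => T _; rewrite inE.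
  congr (nat_of_bool _); apply: eq_forallb => i; by rewrite inE.
have c2 : \sum_T #|BadT T| <= n.+1 ^ r * m ^ t.
  under eq_bigr => T _ do rewrite -sum1_card big_mkcond /=.
  rewrite exchange_big /=.
  apply: (@leq_trans (\sum_(S : {set 'I_n} | #|S| <= r) m ^ t)).
    rewrite [X in _ <= X]big_mkcond /=; apply: leq_sum => S _.
    case: (boolP (#|S| <= r)) => hS; last first.
      rewrite big1 // => T _; rewrite inE /bad (negbTE hS); done.
    case: (boolP (#|cn H S| < m)) => hc; last first.
      rewrite big1 // => T _; rewrite inE /bad (negbTE hc) andbF; done.
    apply: (@leq_trans (#|cn H S| ^ t)); last by apply: pow_mono; apply: ltnW.
    rewrite -sum_ffun_on; apply: eq_leq; apply: eq_bigr => T _.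
    rewrite inE /bad hS hc /=; congr (nat_of_bool _).
    apply/subsetP/forallP => [h i | h u uS].
      rewrite inE; apply/forallP => s; apply/implyP => sS.
      by move: (h s sS); rewrite inE => /forallP.
    rewrite inE; apply/forallP => i; move: (h i); rewrite inE => /forallP /(_ u).
    by rewrite uS.
  rewrite (eq_bigl (fun S => S \in [set S : {set 'I_n} | #|S| <= r])); last by move=> S; rewrite inE.
  by rewrite sum_nat_const leq_mul2r card_small_sets orbT.
have [T HT] : exists T, m + #|BadT T| <= #|UT T|.
  case: (boolP [exists T, m + #|BadT T| <= #|UT T|]) => [/existsP //| /existsPn hn].
  exfalso.
  have : \sum_T (#|UT T| + 1) <= \sum_T (m + #|BadT T|).
    by apply: leq_sum => T _; move: (hn T); rewrite -ltnNge addn1.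
  rewrite !big_split /= !sum_nat_const card_ffun !card_ord c1.
  have : 0 < n ^ t by rewrite expn_gt0 n0.
  move=> h3 h4; have h5 := leq_trans h4 (leq_add (leqnn _) c2).
  move: hyp h3 h5; rewrite muln1; set X := \sum_(u < n) _; lia.
pose t0 : 'I_n := Ordinal n0.
pose R := [set odflt t0 [pick x in S] | S : {set 'I_n} in BadT T].
exists (UT T :\: R); split.
  rewrite cardsD.
  have : #|UT T :&: R| <= #|BadT T|.
    by apply: leq_trans (leq_imset_card _ _); apply: subset_leq_card; apply: subsetIr.
  move=> b; apply: leq_trans _ (leq_sub2l _ b).
  rewrite leq_subRL; [by rewrite addnC | exact: leq_trans (leq_addl _ _) HT].
move=> S SU Sr; rewrite leqNgt; apply/negP => Sc.
have SB : S \in BadT T.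
  rewrite inE /bad Sr Sc /=; apply: subset_trans SU _; exact: subsetDl.
have [x xS] : exists x, x \in S.
  apply/set0Pn/negP => /eqP S0; move: Sc; rewrite S0 ltnNge; move/negP; apply.
  apply: leq_trans mn _; rewrite -{1}(card_ord n); apply: subset_leq_card.
  by apply/subsetP => u _; rewrite inE; apply/forallP => s; rewrite inE.
have pS : odflt t0 [pick x in S] \in S.
  by case: pickP => [y yS | h] //=; move: (h x); rewrite xS.
have pR : odflt t0 [pick x in S] \in R by apply: imset_f.
by move: (subsetP SU _ pS); rewrite inE pR.
Qed.

Lemma cheb (I : finType) (x : I -> nat) t :
  (\sum_i x i) * (\sum_i x i ^ t) <= #|I| * \sum_i x i ^ t.+1.
Proof.
have key : forall i j, x i * x j ^ t + x j * x i ^ t <= x i ^ t.+1 + x j ^ t.+1.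
  move=> i j; rewrite !expnS.
  case: (leqP (x i) (x j)) => h.
    have h2 := pow_mono t h; move: h h2.
    set a := x i; set b := x j; set A := a ^ t; set B := b ^ t; nia.
  have h2 := pow_mono t (ltnW h); move: h h2.
  set a := x i; set b := x j; set A := a ^ t; set B := b ^ t; nia.
rewrite -(leq_pmul2l (isT : 0 < 2)).
have e1 : (\sum_i x i) * (\sum_i x i ^ t) = \sum_i \sum_j x i * x j ^ t.
  by rewrite big_distrl /=; apply: eq_bigr => i _; rewrite big_distrr.
have e2 : (\sum_i x i) * (\sum_i x i ^ t) = \sum_i \sum_j x j * x i ^ t.
  by rewrite e1 exchange_big.
rewrite mul2n -addnn {1}e1 e2 -big_split /=.
apply: (@leq_trans (\sum_i \sum_j (x i ^ t.+1 + x j ^ t.+1))).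
  by apply: leq_sum => i _; rewrite -big_split /=; apply: leq_sum => j _; apply: key.
under eq_bigr => i _ do rewrite big_split /= sum_nat_const.
rewrite big_split /= sum_nat_const -big_distrr /= mul2n -addnn cardT.
by rewrite mulnC.
Qed.

Lemma power_mean (I : finType) (x : I -> nat) t :
  (\sum_i x i) ^ t * #|I| <= #|I| ^ t * \sum_i x i ^ t.
Proof.
elim: t => [|t IH].
  by rewrite !expn0 mul1n; under eq_bigr => i _ do rewrite expn0; rewrite sum_nat_const muln1 mul1n.
rewrite expnS -mulnA.
apply: (@leq_trans ((\sum_i x i) * (#|I| ^ t * \sum_i x i ^ t))); first by rewrite leq_mul2l IH orbT.
rewrite mulnCA expnS -mulnA.
by rewrite [X in _ <= X]mulnCA leq_mul2l cheb orbT.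
Qed.

Lemma deg_sum n (H : graph n) : is_graph H -> #|H| <= \sum_(u : 'I_n) #|nb H u|.
Proof.
move=> /forallP hg.
pose P := [set p : 'I_n * 'I_n | [set p.2; p.1] \in H].
have e : \sum_(u : 'I_n) #|nb H u| = #|P|.
  rewrite /nb.
  under eq_bigr => u _ do rewrite -sum_ind_card.
  by rewrite /P -sum_ind_card pair_bigA /=.
rewrite e; apply: leq_trans (leq_imset_card (fun p => [set p.2; p.1]) P).
apply: subset_leq_card; apply/subsetP => E EH.
move: (hg E); rewrite EH /= => /cards2P [a [b [_ eE]]]; rewrite eE in EH *.
by apply/imsetP; exists (b, a); rewrite ?inE.
Qed.

Lemma extremal n m (L : rel 'I_m) A r (H : graph n) t d :
  0 < n -> m <= n -> (forall x y, L x y = L y x) -> bipartite_deg L A r ->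
  is_graph H -> d <= #|H| ->
  n ^ t * (m * n ^ t + n.+1 ^ r * m ^ t) <= d ^ t * n -> contains_sub H L.
Proof.
move=> n0 mn Ls hb hg dH hyp.
have pm := power_mean (fun u : 'I_n => #|nb H u|) t.
rewrite card_ord in pm.
have ds := deg_sum hg.
have h1 : d ^ t * n <= (\sum_(u : 'I_n) #|nb H u|) ^ t * n.
  by rewrite leq_mul2r; apply/orP; right; apply: pow_mono; apply: leq_trans dH ds.
have h2 := leq_trans hyp (leq_trans h1 pm).
rewrite leq_pmul2l ?expn_gt0 ?n0 // in h2.
have [U [mU hU]] := drc n0 mn h2.
exact: embed n0 Ls hb mU hU.
Qed.

Lemma card_bigcup_le (I T : finType) (P : {pred I}) (B : I -> {set T}) :
  #|\bigcup_(i in P) B i| <= \sum_(i in P) #|B i|.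
Proof.
elim/big_rec2: _ => [|j k U _ h]; first by rewrite cards0.
by apply: leq_trans (leq_card_setU _ _) _; rewrite leq_add2l.
Qed.

Definition sd (E : finType) (J J' : {set E}) := (J :\: J') :|: (J' :\: J).

Lemma sdC (E : finType) (J J' : {set E}) : sd J J' = sd J' J.
Proof. by rewrite /sd setUC. Qed.

Lemma sdK (E : finType) (J J' : {set E}) : sd (sd J J') J' = J.
Proof.
apply/setP => x; rewrite /sd !inE.
by case: (x \in J); case: (x \in J').
Qed.

Lemma sdJJ (E : finType) (J : {set E}) : sd J J = set0.
Proof. by rewrite /sd setDv setU0. Qed.

Lemma ball_bound (E : finType) s d : 0 < s ->
  s ^ #|E| * #|[set J : {set E} | #|J| < d]| <= s ^ d * s.+1 ^ #|E|.
Proof.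
move=> s0.
have key : \sum_(J : {set E}) s ^ #|~: J| = s.+1 ^ #|E|.
  have e := @bigA_distr nat 0 1 muln addn E (fun _ => 1) (fun _ => s).
  have e2 : \prod_(i : E) (1 + s) = s.+1 ^ #|E| by rewrite prod_nat_const add1n.
  rewrite -e2 e; apply: eq_big => [J|J _] //.
  rewrite (eq_bigr (fun i => if i \in ~: J then s else 1)); last by move=> i _; rewrite inE; case: (i \in J).
  by rewrite -big_mkcond prod_nat_const.
rewrite -key big_distrr /= mulnC -sum_nat_const.
apply: (@leq_trans (\sum_(J in [set J : {set E} | #|J| < d]) s ^ d * s ^ #|~: J|)).
  apply: leq_sum => J; rewrite inE => hJ.
  by rewrite -(cardsC J) expnD leq_mul2r (leq_pexp2l s0 (ltnW hJ)) orbT.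
rewrite [X in X <= _]big_mkcond; apply: leq_sum => J _; by case: ifP.
Qed.

Lemma gv (E : finType) d : 0 < d -> exists F : {set {set E}},
  (forall J J', J \in F -> J' \in F -> J != J' -> d <= #|sd J J'|) /\
  2 ^ #|E| <= #|F| * #|[set D : {set E} | #|D| < d]|.
Proof.
move=> d0.
pose Sep (F : {set {set E}}) := [forall J in F, forall J' in F, (J != J') ==> (d <= #|sd J J'|)].
have Sep0 : Sep set0 by apply/forallP => J; rewrite inE.
case: (@arg_maxnP _ set0 Sep (fun F => #|F|) Sep0) => F sepF maxF.
exists F; split.
  move=> J J' JF J'F ne; move/forall_inP: sepF => /(_ J JF) /forall_inP /(_ J' J'F).
  by rewrite ne.
have cov : forall J : {set E}, exists2 J', J' \in F & #|sd J J'| < d.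
  move=> J; case: (boolP [exists J' in F, #|sd J J'| < d]) => [/exists_inP [J' h1 h2] | /exists_inP hn].
    by exists J'.
  exfalso.
  have JF : J \notin F.
    apply/negP => JF; apply: hn; exists J => //; by rewrite sdJJ cards0.
  have : Sep (J |: F).
    apply/forall_inP => K /setU1P [-> | KF]; apply/forall_inP => K' /setU1P [-> | K'F];
      apply/implyP => ne.
    - by rewrite eqxx in ne.
    - by rewrite leqNgt; apply/negP => h; apply: hn; exists K'.
    - by rewrite sdC leqNgt; apply/negP => h; apply: hn; exists K.
    - by move/forall_inP: sepF => /(_ K KF) /forall_inP /(_ K' K'F) /implyP; apply.
  move/maxF; rewrite cardsU1 JF add1n => /= h; by rewrite ltnn in h.
pose V := [set D : {set E} | #|D| < d].
have ballb : forall J' : {set E}, #|[set J : {set E} | #|sd J J'| < d]| <= #|V|.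
  move=> J'; rewrite -(@card_in_imset _ _ (fun J => sd J J')); last first.
    by move=> J1 J2 _ _ /= e; rewrite -(sdK J1 J') e sdK.
  apply: subset_leq_card; apply/subsetP => D /imsetP [J]; rewrite !inE => h ->; done.
have : [set: {set E}] \subset \bigcup_(J' in F) [set J | #|sd J J'| < d].
  apply/subsetP => J _; have [J' J'F h] := cov J.
  by apply/bigcupP; exists J' => //; rewrite inE.
move/subset_leq_card; rewrite -powersetT card_powerset cardsT => h.
apply: leq_trans h _; apply: leq_trans (card_bigcup_le _ _) _.
rewrite -sum_nat_const; exact: leq_sum => J' _.
Qed.

Lemma lower_bound n m (L : rel 'I_m) A r t d s :
  0 < n -> m <= n -> (forall x y, L x y = L y x) -> bipartite_deg L A r ->
  0 < d -> 0 < s ->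
  n ^ t * (m * n ^ t + n.+1 ^ r * m ^ t) <= d ^ t * n ->
  2 ^ 'C(n, 2) * s ^ 'C(n, 2) <= M_L n L * s ^ d * s.+1 ^ 'C(n, 2).
Proof.
move=> n0 mn Ls hb d0 s0 hyp.
pose E := {e : {set 'I_n} | #|e| == 2}.
have cE : #|{: E}| = 'C(n, 2).
  rewrite card_sig; have := card_draws 'I_n 2; rewrite card_ord => <-.
  by apply: eq_card => e; rewrite !inE.
have [F [sepF covF]] := @gv E d d0.
pose psi (J : {set E}) : graph n := [set val e | e in J].
have psi_inj : injective psi := imset_inj val_inj.
pose F' := psi @: F.
have cF : #|F'| = #|F| := card_imset _ psi_inj.
have good : good_family L F'.
  apply/andP; split.
    apply/forall_inP => G /imsetP [J _ ->]; apply/forall_inP => e /imsetP [x _ ->].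
    exact: (valP x).
  apply/forall_inP => G /imsetP [J JF ->]; apply/forall_inP => G' /imsetP [J' J'F ->].
  apply/implyP => ne.
  have neJ : J != J' by apply: contraNneq ne => ->.
  apply: (extremal (t:=t) (d:=d) n0 mn Ls hb _ _ hyp).
    apply/forall_inP => e; rewrite /symdiff !inE => /orP [/andP [_ h] | /andP [_ h]];
      move: h => /imsetP [x _ ->]; exact: (valP x).
  apply: leq_trans (sepF J J' JF J'F neJ) _.
  rewrite -(card_imset _ val_inj); apply: subset_leq_card; apply/subsetP => e /imsetP [x xs ->].
  move: xs; rewrite /sd /symdiff !inE => /orP [/andP [h1 h2] | /andP [h1 h2]].
    by rewrite !(mem_imset _ _ val_inj) h1 h2.
  by rewrite !(mem_imset _ _ val_inj) h1 h2 orbT.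
have MF : #|F| <= M_L n L.
  by rewrite -cF; apply: (@leq_bigmax_cond _ (fun F => good_family L F) (fun F => #|F|) F').
have bb := @ball_bound E s d s0.
rewrite cE in covF bb.
move: covF bb MF.
set a := 2 ^ _; set x := s ^ 'C(n, 2); set V := #|_|; set y := s.+1 ^ _.
move=> h1 h2 h3.
rewrite -mulnA.
apply: leq_trans (leq_mul h1 (leqnn x)) _.
rewrite -mulnA; apply: leq_mul h3 _; rewrite mulnC; exact: h2.
Qed.

Lemma upper n m (L : rel 'I_m) : M_L n L <= 2 ^ 'C(n, 2).
Proof.
apply/bigmax_leqP => F /andP [/forall_inP hg _].
apply: (@leq_trans #|powerset [set e : {set 'I_n} | #|e| == 2]|).
  apply: subset_leq_card; apply/subsetP => G GF; rewrite powersetE.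
  apply/subsetP => e eG; rewrite inE; move/forall_inP: (hg G GF); exact.
by rewrite card_powerset card_draws card_ord.
Qed.

Lemma nat_ev K D m n t r : 0 < n -> m ^ t * n ^ (r + 2) <= D * n ^ t ->
  K * 2 ^ r * D <= n ^ 2 -> K * m ^ t * n.+1 ^ r <= n ^ t.
Proof.
move=> n0 h1 h2.
have h3 : n.+1 ^ r <= 2 ^ r * n ^ r by rewrite -expnMn; apply: pow_mono; lia.
have p : 0 < n ^ 2 by rewrite expn_gt0 n0.
rewrite -(leq_pmul2r p).
rewrite expnD in h1.
move: h1 h2 h3 p; set a := m ^ t; set b := n ^ r; set c := n ^ 2; set x := n.+1 ^ r;
  set y := 2 ^ r; set z := n ^ t => h1 h2 h3 p.
have s1 : K * a * x * c <= K * a * (y * b) * c by rewrite leq_mul2r leq_mul2l h3 !orbT.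
have s2 : K * a * (y * b) * c = (K * y) * (a * (b * c)) by rewrite !mulnA; lia.
have s3 : (K * y) * (a * (b * c)) <= (K * y) * (D * z) by rewrite leq_mul2l h1 orbT.
have s4 : (K * y) * (D * z) <= c * z by rewrite mulnA leq_mul2r h2 orbT.
rewrite [z * c]mulnC; lia.
Qed.

Lemma hyp_cond n m s t r : 0 < s -> 0 < t -> 4 * s <= n ->
  (2 * (4 * s * (4 * s)) ^ t) ^ t * m ^ t * n.+1 ^ r <= n ^ t ->
  2 * (4 * s * (4 * s)) ^ t * m ^ t * n.+1 ^ r <= n ^ t ->
  n ^ t * (m * n ^ t + n.+1 ^ r * m ^ t) <= ((n %/ (2 * s)) * (n %/ (2 * s))) ^ t * n.
Proof.
move=> s0 t0 ns.
set P := (4 * s * (4 * s)) ^ t => hA hB.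
set k := n %/ (2 * s).
have P0 : 0 < P by rewrite expn_gt0; apply/orP; left; lia.
have r1 : 1 <= n.+1 ^ r by rewrite expn_gt0.
have hi : 2 * P * m <= n.
  rewrite -(leq_exp2r _ _ t0) expnMn.
  apply: leq_trans hA; rewrite -{1}(muln1 (_ * _)) leq_mul2l r1 orbT //.
have hk : n <= 4 * s * k.
  have := divn_eq n (2 * s); have := ltn_pmod n (_ : 0 < 2 * s); rewrite -/k.
  move=> h; have {h} := h ltac:(lia). nia.
have hp : n ^ t * n ^ t <= P * (k * k) ^ t.
  rewrite -expnMn /P -expnMn; apply: pow_mono; nia.
move: hi hB hp; set X := n ^ t; set Y := n.+1 ^ r; set Z := m ^ t; set W := (k * k) ^ t.
move=> hi hB hp.
rewrite -(leq_pmul2l (_ : 0 < 2 * P)); last by lia.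
have n1 : 1 <= n by lia.
nia.
Qed.

Lemma kpos_l n s : 0 < s -> 4 * s <= n -> 0 < n %/ (2 * s).
Proof. move=> s0 h; rewrite divn_gt0; lia. Qed.

Lemma dN_l n s : 2 <= n -> n %/ (2 * s) * (n %/ (2 * s)) * (s * s) <= 'C(n, 2).
Proof.
move=> n2.
set k := n %/ (2 * s).
have hk : k * (2 * s) <= n by rewrite /k leq_divM.
have c2 : 'C(n, 2) * 2 = n * n.-1.
  by have := bin_ffact n 2; rewrite (_ : 2`! = 2) // ffactnS ffactn1.
have h1 : k * (2 * s) * (k * (2 * s)) <= n * n by apply: leq_mul.
have h2 : n * n <= 2 * (n * n.-1).
  case: n n2 {hk h1 c2 k} => // [[|n]] // _; rewrite /=; nia.
have e : k * (2 * s) * (k * (2 * s)) = 4 * (k * k * (s * s)) by rewrite !mulnA (mulnC 4) -!mulnA; congr (_ * _); rewrite !mulnA; lia.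
rewrite e in h1.
move: h1 h2 c2; set X := k * k * (s * s); set Y := n * n.-1; set Z := n * n; set W := 'C(n, 2).
lia.
Qed.

From Stdlib Require Import Reals Lra.

Lemma expn_pow a b : expn a b = Nat.pow a b.
Proof. elim: b => // b IH; by rewrite expnS IH. Qed.

Lemma Rpower_pos x y : (0 < Rpower x y)%R.
Proof. unfold Rpower; apply: exp_pos. Qed.

Lemma ev_pow (eps : R) (r t : nat) (m : nat -> nat) (C : R) (N1 : nat) :
  (0 < eps)%R -> (INR (r + 2) <= INR t * eps)%R -> (0 < C)%R ->
  (forall n, (N1 <= n)%N -> (INR (m n) <= C * Rpower (INR n) (1 - eps))%R) ->
  exists D : nat, forall n, (N1 <= n)%N -> (0 < n)%N -> (expn (m n) t * expn n (r + 2) <= D * expn n t)%N.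
Proof.
move=> e0 het C0 hm.
have [D HD] := INR_archimed 1 (C ^ t)%R Rlt_0_1.
exists D => n hn n0.
rewrite !expn_pow; apply/leP; apply: INR_le; rewrite !mult_INR !pow_INR.
have x1 : (1 <= INR n)%R by apply: (le_INR 1); apply/leP.
have x0 : (0 < INR n)%R by lra.
set x := INR n in x1 x0 *.
have e1 : (Rpower x (1 - eps) * Rpower x eps = x)%R.
  by rewrite -Rpower_plus; replace (1 - eps + eps)%R with 1%R by ring; rewrite Rpower_1.
have hm1 := hm n hn.
have hm2 : (INR (m n) * Rpower x eps <= C * x)%R.
  rewrite -{2}e1 -Rmult_assoc; apply: Rmult_le_compat_r => //; apply: Rlt_le; apply: Rpower_pos.
have hm3 : ((INR (m n) * Rpower x eps) ^ t <= (C * x) ^ t)%R.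
  apply: pow_incr; split => //; apply: Rmult_le_pos; [apply: pos_INR | apply: Rlt_le; apply: Rpower_pos].
rewrite !Rpow_mult_distr in hm3.
have e2 : (Rpower x eps ^ t = Rpower x (eps * INR t))%R.
  by rewrite -Rpower_pow ?Rpower_mult //; apply: Rpower_pos.
have e3 : (x ^ (r + 2) <= Rpower x (eps * INR t))%R.
  rewrite -Rpower_pow //; apply: Rle_Rpower => //; lra.
have p1 : (0 <= INR (m n) ^ t)%R by apply: pow_le; apply: pos_INR.
have p2 : (0 <= x ^ t)%R by apply: pow_le; lra.
rewrite e2 in hm3.
apply: Rle_trans (Rmult_le_compat_l _ _ _ p1 e3) _.
apply: Rle_trans hm3 _.
apply: Rmult_le_compat_r => //; lra.
Qed.

Lemma ln_le_mono x y : (0 < x)%R -> (x <= y)%R -> (ln x <= ln y)%R.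
Proof.
move=> x0 [h|->]; last by apply: Rle_refl.
by apply: Rlt_le; apply: ln_increasing.
Qed.

Lemma ln_lt_id x : (0 < x)%R -> (ln x < x)%R.
Proof.
move=> x0; rewrite -{2}(ln_exp x); apply: ln_increasing => //.
have := exp_ineq1 x; lra.
Qed.

Lemma ln1p_le x : (0 < x)%R -> (ln (1 + x) <= x)%R.
Proof.
move=> x0; apply: Rlt_le; rewrite -{2}(ln_exp x); apply: ln_increasing; first lra.
by apply: exp_ineq1; lra.
Qed.

Lemma real_bound (N M d s : nat) : (0 < N)%N -> (0 < s)%N -> (d * (s * s) <= N)%N ->
  (expn 2 N * expn s N <= M * expn s d * expn s.+1 N)%N -> (M <= expn 2 N)%N ->
  (1 - 4 / INR s <= ln (INR M) / ln 2 / INR N <= 1)%R.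
Proof.
move=> N0 s0 hd hlow hup.
have M0 : (0 < M)%N.
  rewrite lt0n; apply/negP => /eqP M0; rewrite M0 !mul0n in hlow.
  have : (0 < expn 2 N * expn s N)%N by rewrite muln_gt0 !expn_gt0 s0.
  by rewrite lt0n; move: hlow; rewrite leqn0 => ->.
have rN : (0 < INR N)%R by apply: lt_0_INR; apply/ltP.
have rs : (1 <= INR s)%R by apply: (le_INR 1); apply/leP.
have rM : (0 < INR M)%R by apply: lt_0_INR; apply/ltP.
have l2 := ln_lt_2.
have hl : (INR N * ln 2 + INR N * ln (INR s) <= ln (INR M) + INR d * ln (INR s) + INR N * ln (INR s + 1))%R.
  rewrite !expn_pow in hlow; have h := le_INR _ _ (elimT leP hlow).
  have e2 : INR 2 = 2%R by simpl; lra.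
  rewrite !mult_INR !pow_INR e2 (S_INR s) in h.
  have p1 : (0 < 2 ^ N)%R by apply: pow_lt; lra.
  have p2 : (0 < INR s ^ N)%R by apply: pow_lt; lra.
  have p3 : (0 < INR s ^ d)%R by apply: pow_lt; lra.
  have p4 : (0 < (INR s + 1) ^ N)%R by apply: pow_lt; lra.
  have := ln_le_mono (Rmult_lt_0_compat _ _ p1 p2) h.
  rewrite !ln_mult ?ln_pow //; try lra; try (apply: Rmult_lt_0_compat => //; lra).
have rs0 : (0 < INR s)%R by lra.
have F2 : (ln (INR s + 1) <= ln (INR s) + / INR s)%R.
  replace (INR s + 1)%R with (INR s * (1 + / INR s))%R by (field; lra).
  rewrite ln_mult; try lra; last by have := Rinv_0_lt_compat _ rs0; lra.
  have := ln1p_le (Rinv_0_lt_compat _ rs0); lra.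
have F3 : (ln (INR s) <= INR s)%R by apply: Rlt_le; apply: ln_lt_id.
have d0 : (0 <= INR d)%R by apply: pos_INR.
have F4 : (INR d * INR s <= INR N / INR s)%R.
  have hh := le_INR _ _ (elimT leP hd); rewrite !mult_INR in hh.
  apply: (Rmult_le_reg_r (INR s)) => //.
  replace (INR N / INR s * INR s)%R with (INR N) by (field; lra); lra.
have F5 : (INR d * ln (INR s) <= INR d * INR s)%R by apply: Rmult_le_compat_l.
set q := (INR N / INR s)%R in F4.
have q0 : (0 <= q)%R by apply: Rlt_le; apply: Rdiv_lt_0_compat.
have hup2 : (ln (INR M) <= INR N * ln 2)%R.
  rewrite expn_pow in hup; have hh := le_INR _ _ (elimT leP hup).
  have e2 : INR 2 = 2%R by simpl; lra.
  rewrite pow_INR e2 in hh.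
  apply: Rle_trans (ln_le_mono rM hh) _; rewrite ln_pow; lra.
have l20 : (0 < ln 2 * INR N)%R by apply: Rmult_lt_0_compat; lra.
split.
  apply: (Rmult_le_reg_r (ln 2 * INR N)) => //.
  replace (ln (INR M) / ln 2 / INR N * (ln 2 * INR N))%R with (ln (INR M)) by (field; lra).
  replace ((1 - 4 / INR s) * (ln 2 * INR N))%R with (ln 2 * INR N - 4 * ln 2 * q)%R by (rewrite /q; field; lra).
  have h1 : (INR N * / INR s = q)%R by rewrite /q.
  have : (INR N * ln (INR s + 1) <= INR N * ln (INR s) + q)%R.
    rewrite -h1 -Rmult_plus_distr_l; apply: Rmult_le_compat_l => //; lra.
  nra.
apply: (Rmult_le_reg_r (ln 2 * INR N)) => //.
replace (ln (INR M) / ln 2 / INR N * (ln 2 * INR N))%R with (ln (INR M)) by (field; lra).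
lra.
Qed.

Theorem theorem1p6 (r : nat) (eps : R) (m : nat -> nat)
  (L : forall n, rel 'I_(m n)) (A : forall n, {set 'I_(m n)}) :
  (0 < r)%N -> (0 < eps)%R ->
  (forall n, simple_graph (L n) /\ connected (L n) /\ bipartite_deg (L n) (A n) r) ->
  (exists (C : R) (N : nat), forall n, (N <= n)%N ->
      (INR (m n) <= C * Rpower (INR n) (1 - eps))%R) ->
  Un_cv (fun n => (ln (INR (M_L n (L n))) / ln 2 / INR 'C(n, 2))%R) 1%R.
Proof.
move=> r0 e0 Hs [C [N1 hC]].
pose C' := (Rabs C + 1)%R.
have C'0 : (0 < C')%R by have := Rabs_pos C; rewrite /C'; lra.
have hC' : forall n, (N1 <= n)%N -> (INR (m n) <= C' * Rpower (INR n) (1 - eps))%R.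
  move=> n hn; apply: Rle_trans (hC n hn) _; apply: Rmult_le_compat_r.
    by apply: Rlt_le; apply: Rpower_pos.
  by have := Rle_abs C; rewrite /C'; lra.
have [t ht] := INR_archimed eps (INR (r + 2)) e0.
have t0 : (0 < t)%N.
  case: t ht => [|t] ht //; exfalso; have := pos_INR (r + 2); simpl in ht; lra.
have [D hD] := ev_pow e0 (Rlt_le _ _ ht) C'0 hC'.
move=> delta hdelta.
have [s hs] := INR_archimed delta 4 hdelta.
have s0 : (0 < s)%N.
  case: s hs => [|s] hs //; exfalso; simpl in hs; lra.
pose Q := 2 * expn (4 * s * (4 * s)) t.
pose K1 := expn Q t * expn 2 r * D.
pose K2 := Q * expn 2 r * D.
have eK1 : K1 = expn Q t * expn 2 r * D by [].
have eK2 : K2 = Q * expn 2 r * D by [].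
have eQ : Q = 2 * expn (4 * s * (4 * s)) t by [].
clearbody K1 K2 Q.
exists (N1 + 4 * s + K1 + K2 + 2) => n /leP hn.
have n0 : (0 < n)%N by lia.
have nsq : (n <= expn n 2)%N by rewrite expnS expn1 leq_pmulr.
have hN1 : (N1 <= n)%N by lia.
have hD' := hD n hN1 n0.
have hA : (expn Q t * expn (m n) t * expn n.+1 r <= expn n t)%N.
  apply: nat_ev n0 hD' _; apply: leq_trans _ nsq; rewrite -eK1; lia.
have hB : (Q * expn (m n) t * expn n.+1 r <= expn n t)%N.
  apply: nat_ev n0 hD' _; apply: leq_trans _ nsq; rewrite -eK2; lia.
have ns : (4 * s <= n)%N by lia.
have mn : (m n <= n)%N.
  have r1 : (1 <= expn n.+1 r)%N by rewrite expn_gt0.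
  have h1 : (expn (Q * m n) t <= expn n t)%N.
    rewrite expnMn; apply: leq_trans hA; rewrite -{1}(muln1 (_ * _)) leq_mul2l r1 orbT //.
  rewrite leq_exp2r // in h1; apply: leq_trans h1; rewrite leq_pmull //; rewrite eQ muln_gt0 expn_gt0; lia.
rewrite eQ in hA hB.
have Hc := hyp_cond s0 t0 ns hA hB.
have d0 : (0 < n %/ (2 * s) * (n %/ (2 * s)))%N by rewrite muln_gt0 kpos_l.
have dN := dN_l s (_ : (2 <= n)%N).
have {}dN := dN ltac:(lia).
have N0 : (0 < 'C(n, 2))%N by rewrite bin_gt0; lia.
have [Ls _] := (Hs n).1.
have hb := (Hs n).2.2.
have lb := lower_bound n0 mn Ls hb d0 s0 Hc.
have ub := upper n (L n).
have [b1 b2] := real_bound N0 s0 dN lb ub.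
rewrite /R_dist Rabs_left1; last by lra.
have : (4 / INR s < delta)%R.
  have sp : (0 < INR s)%R by apply: lt_0_INR; apply/ltP.
  apply: (Rmult_lt_reg_r (INR s)) => //.
  replace (4 / INR s * INR s)%R with 4%R by (field; lra); lra.
lra.
Qed.
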